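(* Let $\mathbb C$ be a homological category with finite colimits, and let $x\colon X\to A$, $y\colon Y\to A$ be morphisms whose images are normal monomorphisms. Then the morphism $\gamma_1=\gamma_{1_A}\colon (A+X)\times_A(A+Y)\to A_3$ is a normal epimorphism.
   Context: A homological category is a regular pointed category in which the Split Short Five Lemma holds; the image of a morphism is the monomorphism part of its (regular epi, mono) factorization; a normal monomorphism is a kernel of some morphism and a normal epimorphism a cokernel of some morphism. Notation: $\iota_i$ coproduct injections, $[a,b]$ copairing, $\langle a,b,c\rangle$ pairing into a limit. $(A+X)\times_A(A+Y)$ is the pullback of $[1,0]\colon A+X\to A$ and $[1,0]\colon A+Y\to A$, with projections $\pi_1,\pi_2$. $A_3=A\times_{A/X}A\times_{A/Y}A$ is the limit of $A\xrightarrow{\mathsf{coker}(x)}A/X\xleftarrow{\mathsf{coker}(x)}A\xrightarrow{\mathsf{coker}(y)}A/Y\xleftarrow{\mathsf{coker}(y)}A$, and $\gamma_1=\langle [1,x]\pi_1,[1,0]\pi_1,[1,y]\pi_2\rangle$. *)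

(* Defs.v *)
Set Implicit Arguments.

Record Category := {
  Ob :> Type;
  Hom : Ob -> Ob -> Type;
  idm : forall A, Hom A A;
  comp : forall A B C, Hom B C -> Hom A B -> Hom A C;
  comp_id_l : forall A B (f : Hom A B), comp (idm B) f = f;
  comp_id_r : forall A B (f : Hom A B), comp f (idm A) = f;
  comp_assoc : forall A B C D (h : Hom C D) (g : Hom B C) (f : Hom A B),
      comp h (comp g f) = comp (comp h g) f
}.

Arguments Hom {c} _ _.
Arguments idm {c} _.
Arguments comp {c A B C} _ _.

Notation "g ∘ f" := (comp g f) (at level 40, left associativity).

Section Defs.
Context {C : Category}.

Definition is_mono {A B : C} (f : Hom A B) : Prop :=
  forall (Z : C) (g h : Hom Z A), f ∘ g = f ∘ h -> g = h.

Definition is_iso {A B : C} (f : Hom A B) : Prop :=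
  exists g : Hom B A, g ∘ f = idm A /\ f ∘ g = idm B.

Definition is_initial (I : C) : Prop :=
  forall B : C, exists f : Hom I B, forall g : Hom I B, g = f.

Definition is_terminal (T : C) : Prop :=
  forall B : C, exists f : Hom B T, forall g : Hom B T, g = f.

Definition is_zero_object (Z : C) : Prop := is_initial Z /\ is_terminal Z.

Definition is_pointed : Prop := exists Z : C, is_zero_object Z.

Definition is_zero_mor {A B : C} (f : Hom A B) : Prop :=
  exists (Z : C) (g : Hom A Z) (h : Hom Z B), is_zero_object Z /\ f = h ∘ g.

Definition is_pullback {A B D P : C} (f : Hom A D) (g : Hom B D)
  (p1 : Hom P A) (p2 : Hom P B) : Prop :=
  f ∘ p1 = g ∘ p2 /\
  forall (Q : C) (q1 : Hom Q A) (q2 : Hom Q B), f ∘ q1 = g ∘ q2 ->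
    exists u : Hom Q P, p1 ∘ u = q1 /\ p2 ∘ u = q2 /\
      forall v : Hom Q P, p1 ∘ v = q1 -> p2 ∘ v = q2 -> v = u.

Definition is_pushout {D A B P : C} (f : Hom D A) (g : Hom D B)
  (i1 : Hom A P) (i2 : Hom B P) : Prop :=
  i1 ∘ f = i2 ∘ g /\
  forall (Q : C) (q1 : Hom A Q) (q2 : Hom B Q), q1 ∘ f = q2 ∘ g ->
    exists u : Hom P Q, u ∘ i1 = q1 /\ u ∘ i2 = q2 /\
      forall v : Hom P Q, v ∘ i1 = q1 -> v ∘ i2 = q2 -> v = u.

Definition is_coproduct {A B S : C} (i1 : Hom A S) (i2 : Hom B S) : Prop :=
  forall (Q : C) (q1 : Hom A Q) (q2 : Hom B Q),
    exists u : Hom S Q, u ∘ i1 = q1 /\ u ∘ i2 = q2 /\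
      forall v : Hom S Q, v ∘ i1 = q1 -> v ∘ i2 = q2 -> v = u.

Definition is_coequalizer {A B Q : C} (f g : Hom A B) (q : Hom B Q) : Prop :=
  q ∘ f = q ∘ g /\
  forall (Z : C) (h : Hom B Z), h ∘ f = h ∘ g ->
    exists u : Hom Q Z, u ∘ q = h /\ forall v : Hom Q Z, v ∘ q = h -> v = u.

Definition is_regular_epi {B Q : C} (q : Hom B Q) : Prop :=
  exists (A : C) (f g : Hom A B), is_coequalizer f g q.

Definition is_kernel {K A B : C} (k : Hom K A) (f : Hom A B) : Prop :=
  is_zero_mor (f ∘ k) /\
  forall (Z : C) (g : Hom Z A), is_zero_mor (f ∘ g) ->
    exists u : Hom Z K, k ∘ u = g /\ forall v : Hom Z K, k ∘ v = g -> v = u.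

Definition is_cokernel {B Q A : C} (q : Hom B Q) (f : Hom A B) : Prop :=
  is_zero_mor (q ∘ f) /\
  forall (Z : C) (g : Hom B Z), is_zero_mor (g ∘ f) ->
    exists u : Hom Q Z, u ∘ q = g /\ forall v : Hom Q Z, v ∘ q = g -> v = u.

Definition is_normal_mono {K A : C} (k : Hom K A) : Prop :=
  exists (B : C) (f : Hom A B), is_kernel k f.

Definition is_normal_epi {B Q : C} (q : Hom B Q) : Prop :=
  exists (A : C) (f : Hom A B), is_cokernel q f.

Definition has_finite_limits : Prop :=
  (exists T : C, is_terminal T) /\
  forall (A B D : C) (f : Hom A D) (g : Hom B D),
    exists (P : C) (p1 : Hom P A) (p2 : Hom P B), is_pullback f g p1 p2.

Definition has_finite_colimits : Prop :=
  (exists I : C, is_initial I) /\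
  forall (D A B : C) (f : Hom D A) (g : Hom D B),
    exists (P : C) (i1 : Hom A P) (i2 : Hom B P), is_pushout f g i1 i2.

Definition is_regular : Prop :=
  has_finite_limits /\
  (forall (A B P : C) (f : Hom A B) (p1 p2 : Hom P A), is_pullback f f p1 p2 ->
     exists (Q : C) (q : Hom A Q), is_coequalizer p1 p2 q) /\
  (forall (A B D P : C) (f : Hom A D) (g : Hom B D) (p1 : Hom P A) (p2 : Hom P B),
     is_pullback f g p1 p2 -> is_regular_epi g -> is_regular_epi p1).

Definition split_short_five_lemma : Prop :=
  forall (K A B K' A' B' : C)
    (k : Hom K A) (p : Hom A B) (s : Hom B A)
    (k' : Hom K' A') (p' : Hom A' B') (s' : Hom B' A')
    (u : Hom K K') (v : Hom A A') (w : Hom B B'),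
    is_kernel k p -> p ∘ s = idm B ->
    is_kernel k' p' -> p' ∘ s' = idm B' ->
    v ∘ k = k' ∘ u -> p' ∘ v = w ∘ p -> v ∘ s = s' ∘ w ->
    is_iso u -> is_iso w -> is_iso v.

Definition is_homological : Prop :=
  is_regular /\ is_pointed /\ split_short_five_lemma.

Definition has_normal_image {X A : C} (x : Hom X A) : Prop :=
  exists (I : C) (e : Hom X I) (m : Hom I A),
    is_regular_epi e /\ is_mono m /\ x = m ∘ e /\ is_normal_mono m.

(* (L; l1, l2, l3) is the limit A ×_{A/X} A ×_{A/Y} A of
   A --qx--> A/X <--qx-- A --qy--> A/Y <--qy-- A *)
Definition is_limit_A3 {A QX QY L : C} (qx : Hom A QX) (qy : Hom A QY)
  (l1 l2 l3 : Hom L A) : Prop :=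
  qx ∘ l1 = qx ∘ l2 /\ qy ∘ l2 = qy ∘ l3 /\
  forall (Z : C) (a b c : Hom Z A), qx ∘ a = qx ∘ b -> qy ∘ b = qy ∘ c ->
    exists u : Hom Z L, l1 ∘ u = a /\ l2 ∘ u = b /\ l3 ∘ u = c /\
      forall v : Hom Z L, l1 ∘ v = a -> l2 ∘ v = b -> l3 ∘ v = c -> v = u.

End Defs.

Arguments is_pointed : clear implicits.
Arguments has_finite_limits : clear implicits.
Arguments has_finite_colimits : clear implicits.
Arguments is_regular : clear implicits.
Arguments split_short_five_lemma : clear implicits.
Arguments is_homological : clear implicits.

(* Main.v *)
Require Import Defs.

Local Arguments comp_id_l {c A B} f.
Local Arguments comp_id_r {c A B} f.
Local Arguments comp_assoc {c A B C D} h g f.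

Ltac ra := repeat rewrite <- comp_assoc.

Lemma zero_unique {C : Category} {A B : C} (f g : Hom A B) :
  is_zero_mor f -> is_zero_mor g -> f = g.
Proof.
  intros [Z [g1 [h1 [[HZi HZt] ->]]]] [Z' [g2 [h2 [[HZi' HZt'] ->]]]].
  destruct (HZi Z') as [c Hc].
  destruct (HZt' A) as [t Ht].
  destruct (HZi B) as [b Hb].
  assert (E : h1 = h2 ∘ c) by (rewrite (Hb h1), (Hb (h2 ∘ c)); reflexivity).
  rewrite E, <- comp_assoc. f_equal.
  rewrite (Ht (c ∘ g1)), (Ht g2); reflexivity.
Qed.

Lemma zero_r {C : Category} {A B D : C} (f : Hom A B) (g : Hom B D) :
  is_zero_mor f -> is_zero_mor (g ∘ f).
Proof.
  intros [Z [g1 [h1 [HZ ->]]]]. exists Z, g1, (g ∘ h1). split; auto.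
  apply comp_assoc.
Qed.

Lemma zero_l {C : Category} {A B D : C} (f : Hom B D) (g : Hom A B) :
  is_zero_mor f -> is_zero_mor (f ∘ g).
Proof.
  intros [Z [g1 [h1 [HZ ->]]]]. exists Z, (g1 ∘ g), h1. split; auto.
  symmetry; apply comp_assoc.
Qed.

Lemma zero_ex {C : Category} (Z0 : C) (HZ : is_zero_object Z0) (A B : C) :
  exists z : Hom A B, is_zero_mor z.
Proof.
  destruct HZ as [Hi Ht]. destruct (Hi B) as [b _]. destruct (Ht A) as [a _].
  exists (b ∘ a), Z0, a, b. split; auto. split; auto.
Qed.

Definition is_epi {C : Category} {A B : C} (f : Hom A B) : Prop :=
  forall (Z : C) (g h : Hom B Z), g ∘ f = h ∘ f -> g = h.

Lemma regepi_epi {C : Category} {A B : C} (f : Hom A B) : is_regular_epi f -> is_epi f.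
Proof.
  intros [X [a [b [Hab Hu]]]] Z g h E.
  assert (Hg : g ∘ f ∘ a = g ∘ f ∘ b) by (ra; rewrite Hab; reflexivity).
  destruct (Hu Z (g ∘ f) Hg) as [u [Hu1 Hu2]].
  rewrite (Hu2 g eq_refl), (Hu2 h (eq_sym E)). reflexivity.
Qed.

Lemma epi_comp {C : Category} {A B D : C} (f : Hom A B) (g : Hom B D) :
  is_epi f -> is_epi g -> is_epi (g ∘ f).
Proof. intros Hf Hg Z a b E. apply Hg, Hf. rewrite <- !comp_assoc. exact E. Qed.

Lemma pb_ext {C : Category} {A B D P : C} (f : Hom A D) (g : Hom B D)
  (p1 : Hom P A) (p2 : Hom P B) : is_pullback f g p1 p2 ->
  forall Q (v w : Hom Q P), p1 ∘ v = p1 ∘ w -> p2 ∘ v = p2 ∘ w -> v = w.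
Proof.
  intros [Hc Hu] Q v w E1 E2.
  assert (H : f ∘ (p1 ∘ v) = g ∘ (p2 ∘ v)) by (rewrite !comp_assoc, Hc; reflexivity).
  destruct (Hu Q _ _ H) as [u [_ [_ Hun]]].
  rewrite (Hun v eq_refl eq_refl), (Hun w (eq_sym E1) (eq_sym E2)). reflexivity.
Qed.

Definition is_product {C : Category} {P X Y : C} (a : Hom P X) (b : Hom P Y) : Prop :=
  forall (Q : C) (q1 : Hom Q X) (q2 : Hom Q Y),
    exists u : Hom Q P, a ∘ u = q1 /\ b ∘ u = q2 /\
      forall v : Hom Q P, a ∘ v = q1 -> b ∘ v = q2 -> v = u.

Lemma prod_ext {C : Category} {P X Y : C} (a : Hom P X) (b : Hom P Y) :
  is_product a b -> forall Q (v w : Hom Q P), a ∘ v = a ∘ w -> b ∘ v = b ∘ w -> v = w.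
Proof.
  intros Hu Q v w E1 E2.
  destruct (Hu Q (a ∘ v) (b ∘ v)) as [u [_ [_ Hun]]].
  rewrite (Hun v eq_refl eq_refl), (Hun w (eq_sym E1) (eq_sym E2)). reflexivity.
Qed.

Lemma prod_swap {C : Category} {P X Y : C} (a : Hom P X) (b : Hom P Y) :
  is_product a b -> is_product b a.
Proof.
  intros H Q q1 q2. destruct (H Q q2 q1) as [u [H1 [H2 H3]]].
  exists u; repeat split; auto.
Qed.

Lemma prod_ex {C : Category} (Z0 : C) (HZ : is_zero_object Z0)
  (HL : has_finite_limits C) (X Y : C) :
  exists (P : C) (a : Hom P X) (b : Hom P Y), is_product a b.
Proof.
  destruct HZ as [Hi Ht]. destruct (Ht X) as [tx Htx]. destruct (Ht Y) as [ty Hty].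
  destruct HL as [_ HL]. destruct (HL X Y Z0 tx ty) as [P [a [b [Hc Hu]]]].
  exists P, a, b. intros Q q1 q2.
  destruct (Ht Q) as [tq Htq].
  assert (E : tx ∘ q1 = ty ∘ q2) by (rewrite (Htq (tx ∘ q1)), (Htq (ty ∘ q2)); reflexivity).
  exact (Hu Q q1 q2 E).
Qed.

Lemma eq_ex {C : Category} (Z0 : C) (HZ : is_zero_object Z0)
  (HL : has_finite_limits C) {R W : C} (h1 h2 : Hom R W) :
  exists (E : C) (e : Hom E R), h1 ∘ e = h2 ∘ e /\ is_mono e /\
    forall (Z : C) (z : Hom Z R), h1 ∘ z = h2 ∘ z -> exists u, e ∘ u = z.
Proof.
  destruct (prod_ex Z0 HZ HL R W) as [RW [a [b Hp]]].
  destruct (Hp R (idm R) h1) as [g1 [Ha1 [Hb1 _]]].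
  destruct (Hp R (idm R) h2) as [g2 [Ha2 [Hb2 _]]].
  destruct HL as [HT HPB].
  destruct (HPB R R RW g1 g2) as [E [e1 [e2 HE]]].
  assert (E12 : e1 = e2).
  { destruct HE as [Hc _].
    transitivity (a ∘ g1 ∘ e1). { rewrite Ha1, comp_id_l. reflexivity. }
    transitivity (a ∘ g2 ∘ e2). { rewrite <- !comp_assoc, Hc. reflexivity. }
    rewrite Ha2, comp_id_l. reflexivity. }
  subst e2.
  exists E, e1. split; [|split].
  - destruct HE as [Hc _].
    rewrite <- Hb1, <- Hb2, <- !comp_assoc, Hc. reflexivity.
  - intros Z v w Hvw. apply (pb_ext _ _ _ _ HE); auto.
  - intros Z z Hz. destruct HE as [Hc Hu].
    assert (G : g1 ∘ z = g2 ∘ z).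
    { apply (prod_ext _ _ Hp).
      + rewrite !comp_assoc, Ha1, Ha2. reflexivity.
      + rewrite !comp_assoc, Hb1, Hb2. exact Hz. }
    destruct (Hu Z z z G) as [u [Hu1 _]]. exists u; exact Hu1.
Qed.

Lemma iso_id {C : Category} (A : C) : is_iso (idm A).
Proof. exists (idm A). rewrite comp_id_l. auto. Qed.

Lemma joint_epi {C : Category} (Z0 : C) (HZ : is_zero_object Z0)
  (HL : has_finite_limits C) (S : split_short_five_lemma C)
  {K R B W : C} (k : Hom K R) (p : Hom R B) (s : Hom B R) :
  is_kernel k p -> p ∘ s = idm B ->
  forall h1 h2 : Hom R W, h1 ∘ s = h2 ∘ s -> h1 ∘ k = h2 ∘ k -> h1 = h2.
Proof.
  intros Hk Hs h1 h2 E1 E2.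
  destruct (eq_ex Z0 HZ HL h1 h2) as [E [e [He [Hm Hu]]]].
  destruct (Hu _ s E1) as [sE HsE].
  destruct (Hu _ k E2) as [kE HkE].
  assert (HkerE : is_kernel kE (p ∘ e)).
  { destruct Hk as [Hk0 Hku]. split.
    - rewrite <- comp_assoc, HkE. exact Hk0.
    - intros Z g Hg. rewrite <- comp_assoc in Hg.
      destruct (Hku Z (e ∘ g) Hg) as [u [Hu1 Hu2]].
      exists u. split.
      + apply Hm. rewrite comp_assoc, HkE. exact Hu1.
      + intros v Hv. apply Hu2. rewrite <- HkE, <- comp_assoc, Hv. reflexivity. }
  assert (Hiso : is_iso e).
  { apply (S K E B K R B kE (p ∘ e) sE k p s (idm K) e (idm B)); auto.
    - rewrite <- comp_assoc, HsE. exact Hs.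
    - rewrite comp_id_r. exact HkE.
    - rewrite comp_id_l. reflexivity.
    - rewrite comp_id_r. exact HsE.
    - apply iso_id.
    - apply iso_id. }
  destruct Hiso as [g [Hg1 Hg2]].
  rewrite <- (comp_id_r h1), <- (comp_id_r h2), <- Hg2, !comp_assoc, He. reflexivity.
Qed.

Lemma zero_thru {C : Category} (Z0 : C) (HZ : is_zero_object Z0) {A B : C}
  (f : Hom A Z0) (g : Hom Z0 B) : is_zero_mor (g ∘ f).
Proof. exists Z0, f, g. auto. Qed.

Lemma regepi_normal {C : Category} (Z0 : C) (HZ : is_zero_object Z0)
  (HL : has_finite_limits C) (S : split_short_five_lemma C)
  {B Q : C} (q : Hom B Q) : is_regular_epi q -> is_normal_epi q.
Proof.
  intros Hq.
  pose proof HZ as [HI HT].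
  destruct (HI Q) as [zq _].
  pose proof HL as [_ HPB].
  destruct (HPB B Z0 Q q zq) as [K [k [t HK]]].
  destruct (HPB B B Q q q) as [R [r1 [r2 HR]]].
  destruct (zero_ex Z0 HZ K B) as [zKB HzKB].
  assert (Hqk0 : is_zero_mor (q ∘ k)) by (destruct HK as [Hc _]; rewrite Hc; apply zero_thru; auto).
  destruct HR as [HRc HRu].
  destruct (HRu B (idm B) (idm B) eq_refl) as [d [Hd1 [Hd2 _]]].
  assert (E : q ∘ k = q ∘ zKB) by (apply zero_unique; auto; apply zero_r; auto).
  destruct (HRu K k zKB E) as [k' [Hk1 [Hk2 _]]].
  assert (HkerK : forall (Z : C) (z : Hom Z B), is_zero_mor (q ∘ z) ->
            exists u, k ∘ u = z /\ forall v, k ∘ v = z -> v = u).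
  { intros Z z Hz. destruct (HT Z) as [tz Htz].
    assert (E2 : q ∘ z = zq ∘ tz) by (apply zero_unique; auto; apply zero_thru; auto).
    destruct HK as [HKc HKu].
    destruct (HKu Z z tz E2) as [u [Hu1 [Hu2 _]]].
    exists u. split; auto. intros v Hv.
    apply (pb_ext _ _ _ _ (conj HKc HKu)).
    - rewrite Hv, Hu1. reflexivity.
    - rewrite (Htz (t ∘ v)), (Htz (t ∘ u)). reflexivity. }
  assert (Hker' : is_kernel k' r2).
  { split.
    - rewrite Hk2. exact HzKB.
    - intros Z z Hz.
      assert (Hz1 : is_zero_mor (q ∘ (r1 ∘ z))).
      { rewrite comp_assoc, HRc, <- comp_assoc. apply zero_r. exact Hz. }
      destruct (HkerK Z (r1 ∘ z) Hz1) as [u [Hu1 Hu2]].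
      exists u. split.
      + apply (pb_ext _ _ _ _ (conj HRc HRu)).
        * rewrite comp_assoc, Hk1. exact Hu1.
        * rewrite comp_assoc, Hk2. apply zero_unique; auto. apply zero_l; auto.
      + intros v Hv. apply Hu2. rewrite <- Hk1, <- comp_assoc, Hv. reflexivity. }
  destruct Hq as [A' [f [g [Hfg Hcu]]]].
  destruct (HRu A' f g Hfg) as [t' [Ht1 [Ht2 _]]].
  exists K, k. split; auto.
  intros W h Hh.
  assert (Hr : h ∘ r1 = h ∘ r2).
  { apply (joint_epi Z0 HZ HL S k' r2 d Hker' Hd2).
    - rewrite <- !comp_assoc, Hd1, Hd2. reflexivity.
    - rewrite <- !comp_assoc, Hk1, Hk2. apply zero_unique; auto. apply zero_r; auto. }
  apply Hcu. rewrite <- Ht1, <- Ht2, !comp_assoc, Hr. reflexivity.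
Qed.

Lemma factor {C : Category} (HR : is_regular C) {A B : C} (f : Hom A B) :
  exists (I : C) (e : Hom A I) (m : Hom I B),
    is_regular_epi e /\ is_mono m /\ f = m ∘ e.
Proof.
  destruct HR as [[_ HPB] [Hcoeq Hstab]].
  destruct (HPB A A B f f) as [R [r1 [r2 HRp]]].
  destruct (Hcoeq A B R f r1 r2 HRp) as [I [e He]].
  pose proof He as [Her Heu].
  pose proof HRp as [HRc HRu].
  destruct (Heu B f HRc) as [m [Hm _]].
  assert (Hreg : is_regular_epi e) by (exists R, r1, r2; exact He).
  exists I, e, m. split; [exact Hreg|split; [|symmetry; exact Hm]].
  intros Z a b Hab.
  destruct (HPB I I B m m) as [S [s1 [s2 HS]]].
  pose proof HS as [HSc HSu].
  destruct (HSu Z a b Hab) as [w [Hw1 [Hw2 _]]].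
  destruct (HPB I A B m f) as [T [t1 [t2 HT]]].
  pose proof HT as [HTc HTu].
  assert (E1 : m ∘ (e ∘ r1) = f ∘ r2) by (rewrite comp_assoc, Hm; exact HRc).
  destruct (HTu R (e ∘ r1) r2 E1) as [p1 [Hp11 [Hp12 _]]].
  assert (E2 : m ∘ t1 = m ∘ (e ∘ t2)) by (rewrite comp_assoc, Hm; exact HTc).
  destruct (HSu T t1 (e ∘ t2) E2) as [p2 [Hp21 [Hp22 _]]].
  assert (Pb1 : is_pullback t1 e p1 r1).
  { split; [exact Hp11|].
    intros Q q1 q2 Hq.
    assert (Eq : f ∘ q2 = f ∘ (t2 ∘ q1)).
    { transitivity (m ∘ (e ∘ q2)). { rewrite comp_assoc, Hm. reflexivity. }
      rewrite <- Hq, comp_assoc, HTc, <- comp_assoc. reflexivity. }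
    destruct (HRu Q q2 (t2 ∘ q1) Eq) as [u [Hu1 [Hu2 Hu3]]].
    exists u. split; [|split; [exact Hu1|]].
    - apply (pb_ext _ _ _ _ HT).
      + rewrite comp_assoc, Hp11, <- comp_assoc, Hu1. symmetry; exact Hq.
      + rewrite comp_assoc, Hp12. exact Hu2.
    - intros v Hv1 Hv2. apply Hu3; auto.
      rewrite <- Hv1, comp_assoc, Hp12. reflexivity. }
  assert (Pb2 : is_pullback s2 e p2 t2).
  { split; [exact Hp22|].
    intros Q q1 q2 Hq.
    assert (Eq : m ∘ (s1 ∘ q1) = f ∘ q2).
    { rewrite comp_assoc, HSc, <- comp_assoc, Hq, comp_assoc, Hm. reflexivity. }
    destruct (HTu Q (s1 ∘ q1) q2 Eq) as [u [Hu1 [Hu2 Hu3]]].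
    exists u. split; [|split; [exact Hu2|]].
    - apply (pb_ext _ _ _ _ HS).
      + rewrite comp_assoc, Hp21. exact Hu1.
      + rewrite comp_assoc, Hp22, <- comp_assoc, Hu2. symmetry; exact Hq.
    - intros v Hv1 Hv2. apply Hu3; auto.
      rewrite <- Hv1, comp_assoc, Hp21. reflexivity. }
  pose proof (regepi_epi _ (Hstab _ _ _ _ _ _ _ _ Pb1 Hreg)) as Ep1.
  pose proof (regepi_epi _ (Hstab _ _ _ _ _ _ _ _ Pb2 Hreg)) as Ep2.
  assert (Hs : s1 = s2).
  { apply (epi_comp _ _ Ep1 Ep2).
    rewrite (comp_assoc s1 p2 p1), (comp_assoc s2 p2 p1), Hp21, Hp22, Hp11,
      <- comp_assoc, Hp12. exact Her. }
  rewrite <- Hw1, <- Hw2, Hs. reflexivity.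
Qed.

Lemma lift {C : Category} {P I' A3 W : C} (g : Hom P I') (m : Hom W A3)
  (h : Hom I' A3) (w : Hom P W) :
  is_regular_epi g -> is_mono m -> h ∘ g = m ∘ w -> exists t, m ∘ t = h.
Proof.
  intros [X [a [b [Hab Hu]]]] Hm E.
  assert (Hw : w ∘ a = w ∘ b).
  { apply Hm. rewrite !comp_assoc, <- E, <- !comp_assoc, Hab. reflexivity. }
  destruct (Hu W w Hw) as [t [Ht _]].
  exists t. apply (regepi_epi g (ex_intro _ X (ex_intro _ a (ex_intro _ b (conj Hab Hu))))).
  rewrite <- comp_assoc, Ht. symmetry; exact E.
Qed.

Lemma prod_map_regepi {C : Category} (HR : is_regular C)
  {P1 P2 X X' Y : C} (a1 : Hom P1 X) (b1 : Hom P1 Y) (a2 : Hom P2 X') (b2 : Hom P2 Y)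
  (e : Hom X X') (g : Hom P1 P2) :
  is_product a1 b1 -> is_product a2 b2 -> is_regular_epi e ->
  a2 ∘ g = e ∘ a1 -> b2 ∘ g = b1 -> is_regular_epi g.
Proof.
  intros H1 H2 He Ea Eb.
  destruct HR as [_ [_ Hstab]].
  apply (Hstab _ _ _ _ a2 e g a1); auto.
  split; auto.
  intros Q q1 q2 Hq.
  destruct (H1 Q q2 (b2 ∘ q1)) as [u [Hu1 [Hu2 Hu3]]].
  exists u. split; [|split; auto].
  - apply (prod_ext _ _ H2).
    + rewrite comp_assoc, Ea, <- comp_assoc, Hu1. symmetry; exact Hq.
    + rewrite comp_assoc, Eb. exact Hu2.
  - intros v Hv1 Hv2. apply Hu3; auto. rewrite <- Hv1, comp_assoc, Eb. reflexivity.
Qed.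

Lemma regepi_iso {C : Category} {A B D : C} (e : Hom A B) (m : Hom B D) :
  is_regular_epi e -> is_iso m -> is_regular_epi (m ∘ e).
Proof.
  intros [X [a [b [Hab Hu]]]] [mi [Hmi1 Hmi2]].
  exists X, a, b. split.
  - rewrite <- !comp_assoc, Hab. reflexivity.
  - intros Z h Hh. destruct (Hu Z h Hh) as [u [Hu1 Hu2]].
    exists (u ∘ mi). split.
    + rewrite <- !comp_assoc, (comp_assoc mi m e), Hmi1, comp_id_l. exact Hu1.
    + intros v Hv. rewrite <- (Hu2 (v ∘ m)).
      * rewrite <- comp_assoc, Hmi2, comp_id_r. reflexivity.
      * rewrite <- comp_assoc. exact Hv.
Qed.

Lemma image_kernel {C : Category} {X I A Q : C} (x : Hom X A) (e : Hom X I) (m : Hom I A)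
  (q : Hom A Q) :
  is_regular_epi e -> x = m ∘ e -> is_normal_mono m -> is_cokernel q x ->
  is_kernel m q.
Proof.
  intros He Hx [B' [f [Hf0 Hfu]]] [Hq0 Hqu].
  pose proof (regepi_epi e He) as Ee.
  assert (Hqm : is_zero_mor (q ∘ m)).
  { pose proof Hq0 as [Z [g1 [h1 [HZ E]]]].
    destruct (zero_ex Z HZ I Q) as [z Hz].
    replace (q ∘ m) with z; auto.
    apply Ee. apply zero_unique.
    - apply zero_l; auto.
    - rewrite <- comp_assoc, <- Hx. exact Hq0. }
  split; auto.
  intros W g Hg.
  assert (Hfx : is_zero_mor (f ∘ x)) by (rewrite Hx, comp_assoc; apply zero_l; auto).
  destruct (Hqu B' f Hfx) as [u [Hu _]].
  apply Hfu. rewrite <- Hu, <- comp_assoc. apply zero_r. exact Hg.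
Qed.

Theorem theorem1p6 (C : Category) (HC : is_homological C)
  (HF : has_finite_colimits C)
  (A X Y : C) (x : Hom X A) (y : Hom Y A)
  (Hx : has_normal_image x) (Hy : has_normal_image y)
  (AX : C) (i1 : Hom A AX) (i2 : Hom X AX) (HAX : is_coproduct i1 i2)
  (cx zx : Hom AX A)
  (Hcx1 : cx ∘ i1 = idm A) (Hcx2 : cx ∘ i2 = x)
  (Hzx1 : zx ∘ i1 = idm A) (Hzx2 : is_zero_mor (zx ∘ i2))
  (AY : C) (j1 : Hom A AY) (j2 : Hom Y AY) (HAY : is_coproduct j1 j2)
  (cy zy : Hom AY A)
  (Hcy1 : cy ∘ j1 = idm A) (Hcy2 : cy ∘ j2 = y)
  (Hzy1 : zy ∘ j1 = idm A) (Hzy2 : is_zero_mor (zy ∘ j2))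
  (P : C) (pi1 : Hom P AX) (pi2 : Hom P AY) (HP : is_pullback zx zy pi1 pi2)
  (QX : C) (qx : Hom A QX) (Hqx : is_cokernel qx x)
  (QY : C) (qy : Hom A QY) (Hqy : is_cokernel qy y)
  (A3 : C) (l1 l2 l3 : Hom A3 A) (HA3 : is_limit_A3 qx qy l1 l2 l3)
  (gamma1 : Hom P A3)
  (Hg1 : l1 ∘ gamma1 = cx ∘ pi1) (Hg2 : l2 ∘ gamma1 = zx ∘ pi1)
  (Hg3 : l3 ∘ gamma1 = cy ∘ pi2) :
  is_normal_epi gamma1.
Proof.
  destruct HC as [HR [[Z0 HZ] S]].
  pose proof HR as [HL _].
  destruct Hx as [Ix [ex [mx [Hex [Hmx [Hxe Hmxn]]]]]].
  destruct Hy as [Iy [ey [my [Hey [Hmy [Hye Hmyn]]]]]].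
  pose proof (image_kernel x ex mx qx Hex Hxe Hmxn Hqx) as Kx.
  pose proof (image_kernel y ey my qy Hey Hye Hmyn Hqy) as Ky.
  destruct (factor HR gamma1) as [I [e [m [He [Hm Hg]]]]].
  pose proof HP as [HPc HPu].
  pose proof HA3 as [HA31 [HA32 HA3u]].
  assert (A3ext : forall (W : C) (v w : Hom W A3), l1 ∘ v = l1 ∘ w -> l2 ∘ v = l2 ∘ w ->
            l3 ∘ v = l3 ∘ w -> v = w).
  { intros W v w E1 E2 E3.
    assert (F1 : qx ∘ (l1 ∘ v) = qx ∘ (l2 ∘ v)) by (rewrite !comp_assoc, HA31; reflexivity).
    assert (F2 : qy ∘ (l2 ∘ v) = qy ∘ (l3 ∘ v)) by (rewrite !comp_assoc, HA32; reflexivity).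
    destruct (HA3u W _ _ _ F1 F2) as [u [_ [_ [_ Hu]]]].
    rewrite (Hu v), (Hu w); auto. }
  assert (EsP : zx ∘ i1 = zy ∘ j1) by (rewrite Hzx1, Hzy1; reflexivity).
  destruct (HPu A i1 j1 EsP) as [sP [HsP1 [HsP2 _]]].
  assert (Fd1 : qx ∘ idm A = qx ∘ idm A) by reflexivity.
  assert (Fd2 : qy ∘ idm A = qy ∘ idm A) by reflexivity.
  destruct (HA3u A _ _ _ Fd1 Fd2) as [d [Hd1 [Hd2 [Hd3 _]]]].
  assert (Hmd : m ∘ (e ∘ sP) = d).
  { rewrite comp_assoc, <- Hg. apply A3ext.
    - rewrite comp_assoc, Hg1, <- comp_assoc, HsP1, Hcx1, Hd1. reflexivity.
    - rewrite comp_assoc, Hg2, <- comp_assoc, HsP1, Hzx1, Hd2. reflexivity.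
    - rewrite comp_assoc, Hg3, <- comp_assoc, HsP2, Hcy1, Hd3. reflexivity. }
  destruct (prod_ex Z0 HZ HL Ix Iy) as [K3 [ax [ay HK3]]].
  destruct (zero_ex Z0 HZ K3 A) as [zKA HzKA].
  pose proof Kx as [Kx0 Kxu]. pose proof Ky as [Ky0 Kyu].
  assert (Fk1 : qx ∘ (mx ∘ ax) = qx ∘ zKA).
  { apply zero_unique; [rewrite comp_assoc; apply zero_l; auto | apply zero_r; auto]. }
  assert (Fk2 : qy ∘ zKA = qy ∘ (my ∘ ay)).
  { apply zero_unique; [apply zero_r; auto | rewrite comp_assoc; apply zero_l; auto]. }
  destruct (HA3u K3 _ _ _ Fk1 Fk2) as [k3 [Hk31 [Hk32 [Hk33 _]]]].
  assert (Hker3 : is_kernel k3 l2).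
  { split; [rewrite Hk32; auto|].
    intros W g Hgz.
    assert (G1 : is_zero_mor (qx ∘ (l1 ∘ g))) by (rewrite comp_assoc, HA31, <- comp_assoc; apply zero_r; auto).
    assert (G3 : is_zero_mor (qy ∘ (l3 ∘ g))) by (rewrite comp_assoc, <- HA32, <- comp_assoc; apply zero_r; auto).
    destruct (Kxu W _ G1) as [a [Ha _]].
    destruct (Kyu W _ G3) as [c [Hc _]].
    destruct (HK3 W a c) as [u [Hu1 [Hu2 Hu3]]].
    exists u. split.
    - apply A3ext.
      + rewrite comp_assoc, Hk31, <- comp_assoc, Hu1. exact Ha.
      + rewrite comp_assoc, Hk32. apply zero_unique; auto. apply zero_l; auto.
      + rewrite comp_assoc, Hk33, <- comp_assoc, Hu2. exact Hc.
    - intros v Hv. apply Hu3.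
      + apply Hmx. rewrite Ha, <- Hv, !comp_assoc, Hk31. reflexivity.
      + apply Hmy. rewrite Hc, <- Hv, !comp_assoc, Hk33. reflexivity. }
  destruct (prod_ex Z0 HZ HL X Y) as [XY [px [py HXY]]].
  destruct (prod_ex Z0 HZ HL Ix Y) as [IY [bx [by' HIY]]].
  assert (Et : zx ∘ (i2 ∘ px) = zy ∘ (j2 ∘ py)).
  { apply zero_unique; rewrite comp_assoc; apply zero_l; auto. }
  destruct (HPu XY _ _ Et) as [t [Ht1 [Ht2 _]]].
  destruct (HIY XY (ex ∘ px) py) as [g1 [Hg11 [Hg12 _]]].
  destruct (HK3 IY bx (ey ∘ by')) as [g2 [Hg21 [Hg22 _]]].
  assert (Rg1 : is_regular_epi g1) by
    (apply (prod_map_regepi HR px py bx by' ex g1); auto).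
  assert (Rg2 : is_regular_epi g2) by
    (apply (prod_map_regepi HR by' bx ay ax ey g2); auto; apply prod_swap; auto).
  assert (Key : k3 ∘ g2 ∘ g1 = m ∘ (e ∘ t)).
  { rewrite comp_assoc, <- Hg. apply A3ext.
    - transitivity (x ∘ px).
      + rewrite !comp_assoc, Hk31, <- (comp_assoc mx ax g2), Hg21, <- comp_assoc, Hg11,
          comp_assoc, <- Hxe. reflexivity.
      + rewrite comp_assoc, Hg1, <- comp_assoc, Ht1, comp_assoc, Hcx2. reflexivity.
    - apply zero_unique.
      + rewrite !comp_assoc, Hk32. apply zero_l, zero_l. exact HzKA.
      + rewrite comp_assoc, Hg2, <- comp_assoc, Ht1, comp_assoc.
        apply zero_l; auto.
    - transitivity (y ∘ py).
      + rewrite !comp_assoc, Hk33, <- (comp_assoc my ay g2), Hg22, <- !comp_assoc, Hg12,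
          comp_assoc, <- Hye. reflexivity.
      + rewrite comp_assoc, Hg3, <- comp_assoc, Ht2, comp_assoc, Hcy2. reflexivity. }
  destruct (lift g1 m (k3 ∘ g2) (e ∘ t) Rg1 Hm Key) as [t1 Ht1'].
  destruct (lift g2 m k3 t1 Rg2 Hm (eq_sym Ht1')) as [kI HkI].
  assert (HkerI : is_kernel kI (l2 ∘ m)).
  { pose proof Hker3 as [H30 H3u]. split.
    - rewrite <- comp_assoc, HkI. exact H30.
    - intros W g Hgz. rewrite <- comp_assoc in Hgz.
      destruct (H3u W _ Hgz) as [u [Hu1 Hu2]].
      exists u. split.
      + apply Hm. rewrite comp_assoc, HkI. exact Hu1.
      + intros v Hv. apply Hu2. rewrite <- HkI, <- comp_assoc, Hv. reflexivity. }
  assert (Hiso : is_iso m).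
  { apply (S K3 I A K3 A3 A kI (l2 ∘ m) (e ∘ sP) k3 l2 d (idm K3) m (idm A)); auto.
    - rewrite <- comp_assoc, Hmd. exact Hd2.
    - rewrite comp_id_r. exact HkI.
    - rewrite comp_id_l. reflexivity.
    - rewrite comp_id_r. exact Hmd.
    - apply iso_id.
    - apply iso_id. }
  apply (regepi_normal Z0 HZ HL S).
  rewrite Hg. apply regepi_iso; auto.
Qed.
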